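(* For the cyclically closed $2\times2\times M$ lattice model described in the context, with arbitrary real couplings $(J_\alpha)_{\alpha\in\Phi}$ and temperature $T>0$, let $Z_M=\sum_\sigma \exp(-\mathcal H(\sigma)/(k_BT))$ (sum over all $\sigma\in\{-1,1\}^{4M}$), let $Z'_M$ be the same sum restricted to non-percolation configurations, and let $P_M=Z'_M/Z_M$ be the non-percolation probability. Let $\lambda_{\max}$ be the largest real root of the characteristic equation of the $4\times4$ matrix $\tau$, and $\mu_{\max}$ the largest real root of the characteristic equation of the $3\times3$ matrix $\tau'$, both defined in the context. Then $$\lim_{M\to\infty}\frac{\ln P_M}{M}=\ln\frac{\mu_{\max}}{\lambda_{\max}}.$$
   Context: Lattice: sites $t_i^m$, $i\in\{0,1,2,3\}$, $m\in\{0,\dots,M-1\}$, with cyclic closure $t_i^M\equiv t_i^0$; each site carries a spin $\sigma_{t_i^m}=\sigma_i^m\in\{-1,1\}$. For a set $\Omega$ of sites, $\sigma_\Omega=\prod_{t\in\Omega}\sigma_t$. For fixed $m$ write $a_i=t_i^m$, $b_i=t_i^{m+1}$, and $C_m=\{a_0,\dots,a_3,b_0,\dots,b_3\}$. Let $\rho$ be the rotation $\rho(a_i)=a_{i+1\bmod4}$, $\rho(b_i)=b_{i+1\bmod 4}$. Generating supports $\Phi=\Phi_2\cup\Phi_4\cup\Phi_6\cup\Phi_8$: $\Phi_2=\{\{a_0,a_1\},\{a_0,a_2\},\{b_0,b_1\},\{b_0,b_2\},\{a_0,b_0\},\{a_0,b_1\},\{a_0,b_2\},\{a_0,b_3\}\}$;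 $\Phi_4$ consists of the 22 sets $\{a_0,b_0,b_1,b_2\}$, $\{a_0,b_1,b_2,b_3\}$, $\{a_0,b_2,b_3,b_0\}$, $\{a_0,b_3,b_0,b_1\}$, $\{a_0,a_1,b_0,b_1\}$, $\{a_0,a_1,b_1,b_2\}$, $\{a_0,a_1,b_2,b_3\}$, $\{a_0,a_1,b_3,b_0\}$, $\{a_0,a_1,b_0,b_2\}$, $\{a_0,a_1,b_1,b_3\}$, $\{a_0,a_2,b_0,b_1\}$, $\{a_0,a_2,b_1,b_2\}$, $\{a_0,a_2,b_2,b_3\}$, $\{a_0,a_2,b_3,b_0\}$, $\{a_0,a_2,b_0,b_2\}$, $\{a_0,a_2,b_1,b_3\}$, $\{a_0,a_1,a_2,b_0\}$, $\{a_0,a_1,a_2,b_1\}$, $\{a_0,a_1,a_2,b_2\}$, $\{a_0,a_1,a_2,b_3\}$, $\{a_0,a_1,a_2,a_3\}$, $\{b_0,b_1,b_2,b_3\}$; $\Phi_6=\{C_m\setminus\beta:\beta\in\Phi_2\}$; $\Phi_8=\{C_m\}$. Couplings $J_\alpha\in\mathbb R$ ($\alpha\in\Phi$), independent of $m$. $\mathcal H^m=-\sum_{\alpha\in\Phi}J_\alpha\sum_{r=0}^3\sigma_{\rho^r(\alpha)}$, $\mathcal H=\sum_{m=0}^{M-1}\mathcal H^m$. Percolation: a configuration is a percolation configuration if for some $m\in\{0,\dots,M-1\}$ one of $\sigma_0^m=\sigma_1^m=-1$, $\sigma_1^m=\sigma_2^m=-1$, $\sigma_2^m=\sigma_3^m=-1$,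 $\sigma_3^m=\sigma_0^m=-1$ holds; otherwise it is a non-percolation configuration. Transfer matrices: index a layer state $(s_0,\dots,s_3)\in\{-1,1\}^4$ by $k=1+\sum_{i=0}^3 2^i(1-s_i)/2$. $\theta_{k,l}=\exp(-\mathcal H^m/(k_BT))$ with layer $m$ in state $k$ and layer $m+1$ in state $l$. $\tau$ is $4\times4$ with $\tau_{i,j}=\sum_{l\in G_j}\theta_{r_i,l}$, $(r_1,\dots,r_4)=(1,2,4,6)$, $G_1=\{1,16\}$, $G_2=\{2,3,5,8,9,12,14,15\}$, $G_3=\{4,7,10,13\}$, $G_4=\{6,11\}$. $\tau'$ is $3\times3$ with $\tau'_{i,j}=\sum_{l\in G'_j}\theta_{r'_i,l}$, $(r'_1,r'_2,r'_3)=(1,2,6)$, $G'_1=\{1\}$, $G'_2=\{2,3,5,9\}$, $G'_3=\{6,11\}$. *)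

(* Defs.v *)
From HB Require Import structures.
From mathcomp Require Import all_boot all_order all_algebra.
From mathcomp Require Import all_classical all_reals all_analysis.
Set Implicit Arguments. Unset Strict Implicit. Unset Printing Implicit Defensive.
Import Order.TTheory GRing.Theory Num.Theory.
Local Open Scope ring_scope.

(* Sites of C_m: (0,i) = a_i = t_i^m ,  (1,i) = b_i = t_i^{m+1}. *)
Definition Site := ('I_2 * 'I_4)%type.
Definition a (i : nat) : Site := (@inord 1 0, @inord 3 i).
Definition b (i : nat) : Site := (@inord 1 1, @inord 3 i).

(* A layer state: (s_0,..,s_3); the boolean is true iff the spin is -1. *)
Definition layer := {ffun 'I_4 -> bool}.
Definition spin {R : pzRingType} (x : bool) : R := if x then -1 else 1.

Definition Phi2 : seq {set Site} :=
  [:: [set a 0; a 1]; [set a 0; a 2]; [set b 0; b 1]; [set b 0; b 2];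
      [set a 0; b 0]; [set a 0; b 1]; [set a 0; b 2]; [set a 0; b 3]].

Definition Phi4 : seq {set Site} :=
  [:: [set a 0; b 0; b 1; b 2]; [set a 0; b 1; b 2; b 3];
      [set a 0; b 2; b 3; b 0]; [set a 0; b 3; b 0; b 1];
      [set a 0; a 1; b 0; b 1]; [set a 0; a 1; b 1; b 2];
      [set a 0; a 1; b 2; b 3]; [set a 0; a 1; b 3; b 0];
      [set a 0; a 1; b 0; b 2]; [set a 0; a 1; b 1; b 3];
      [set a 0; a 2; b 0; b 1]; [set a 0; a 2; b 1; b 2];
      [set a 0; a 2; b 2; b 3]; [set a 0; a 2; b 3; b 0];
      [set a 0; a 2; b 0; b 2]; [set a 0; a 2; b 1; b 3];
      [set a 0; a 1; a 2; b 0]; [set a 0; a 1; a 2; b 1];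
      [set a 0; a 1; a 2; b 2]; [set a 0; a 1; a 2; b 3];
      [set a 0; a 1; a 2; a 3]; [set b 0; b 1; b 2; b 3]].

Definition Phi6 : seq {set Site} := [seq ~: beta | beta <- Phi2].
Definition Phi8 : seq {set Site} := [:: [set: Site]].

(* Phi as a set of supports (duplicates, if any, are identified). *)
Definition Phi : {set {set Site}} := [set S in Phi2 ++ Phi4 ++ Phi6 ++ Phi8].

Definition rot (r : nat) (O : {set Site}) : {set Site} :=
  [set ((t.1, @inord 3 ((nat_of_ord t.2 + r) %% 4)) : Site) | t : Site in O].

Definition sigmaO {R : pzRingType} (sa sb : layer) (O : {set Site}) : R :=
  \prod_(t in O) spin (if t.1 == ord0 then sa t.2 else sb t.2).

Definition Hm {R : pzRingType} (J : {set Site} -> R) (sa sb : layer) : R :=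
  - \sum_(al in Phi) J al * \sum_(r < 4) sigmaO sa sb (rot r al).

(* Configurations of the cyclic 2x2xM lattice: sigma m i = true iff sigma_i^m = -1 *)
Definition config (M : nat) := {ffun 'I_M -> layer}.

Definition Ham {R : pzRingType} (J : {set Site} -> R) (M : nat) (s : config M) : R :=
  \sum_(m < M) Hm J (s m) (s (ordS m)).

Definition percolation (M : nat) (s : config M) : bool :=
  [exists m : 'I_M, exists i : 'I_4, s m i && s m (ordS i)].

Section Model.
Variable R : realType.

Definition Z (J : {set Site} -> R) (kB T : R) (M : nat) : R :=
  \sum_(s : config M) expR (- Ham J s / (kB * T)).

Definition Z' (J : {set Site} -> R) (kB T : R) (M : nat) : R :=
  \sum_(s : config M | ~~ percolation s) expR (- Ham J s / (kB * T)).

Definition PM (J : {set Site} -> R) (kB T : R) (M : nat) : R := Z' J kB T M / Z J kB T M.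

(* layer state with index k = 1 + sum_i 2^i (1-s_i)/2 *)
Definition state_of_index (k : nat) : layer := [ffun i : 'I_4 => odd (k.-1 %/ 2 ^ i)].

Definition theta (J : {set Site} -> R) (kB T : R) (k l : nat) : R :=
  expR (- Hm J (state_of_index k) (state_of_index l) / (kB * T)).

Definition rows_tau : seq nat := [:: 1; 2; 4; 6].
Definition G_tau : seq (seq nat) :=
  [:: [:: 1; 16]; [:: 2; 3; 5; 8; 9; 12; 14; 15]; [:: 4; 7; 10; 13]; [:: 6; 11]].
Definition rows_tau' : seq nat := [:: 1; 2; 6].
Definition G_tau' : seq (seq nat) := [:: [:: 1]; [:: 2; 3; 5; 9]; [:: 6; 11]].

Definition tau (J : {set Site} -> R) (kB T : R) : 'M[R]_4 :=
  \matrix_(i < 4, j < 4)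
    \sum_(l <- nth [::] G_tau j) theta J kB T (nth 0%N rows_tau i) l.

Definition tau' (J : {set Site} -> R) (kB T : R) : 'M[R]_3 :=
  \matrix_(i < 3, j < 3)
    \sum_(l <- nth [::] G_tau' j) theta J kB T (nth 0%N rows_tau' i) l.

End Model.

(* Main.v *)
Require Import Defs.
From HB Require Import structures.
From mathcomp Require Import all_boot all_order all_algebra.
From mathcomp Require Import all_classical all_reals all_analysis.
Import Order.TTheory GRing.Theory Num.Theory.
Import numFieldNormedType.Exports.
From mathcomp Require Import lra ring.

Definition bitn (i k : nat) : bool := odd (k.-1 %/ 2 ^ i).
Definition idxn (k : nat) : nat := (1 + bitn 0 k + 2 * bitn 1 k + 4 * bitn 2 k + 8 * bitn 3 k)%N.
Definition gI (p : nat) (bb : bool) (k : nat) : nat :=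
  (1 + (bb (+) bitn ((0 + p) %% 4) k) + 2 * (bb (+) bitn ((1 + p) %% 4) k)
     + 4 * (bb (+) bitn ((2 + p) %% 4) k) + 8 * (bb (+) bitn ((3 + p) %% 4) k))%N.
Definition okn (k : nat) : bool :=
  ~~ (bitn 0 k && bitn 1 k || bitn 1 k && bitn 2 k || bitn 2 k && bitn 3 k || bitn 3 k && bitn 0 k).
Definition orbi (k : nat) : nat :=
  if k \in [:: 1; 16] then 0 else if k \in [:: 2; 3; 5; 8; 9; 12; 14; 15] then 1
  else if k \in [:: 4; 7; 10; 13] then 2 else 3.
Definition orbi' (k : nat) : nat :=
  if k == 1 then 0 else if k \in [:: 2; 3; 5; 9] then 1 else 2.
Definition pbs : seq (nat * bool) := [seq (p, bb) | p <- iota 0 4, bb <- [:: false; true]].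
Definition good (G : seq (seq nat)) (rows : seq nat) (orbf : nat -> nat) (k : nat) : bool :=
  has (fun pb : nat * bool =>
     (gI pb.1 pb.2 k == nth 0 rows (orbf k)) &&
     all (fun Gj => perm_eq (map (gI pb.1 pb.2) Gj) Gj) G) pbs.
Lemma C1 : all (fun k => idxn k == k) (iota 1 16). Proof. by vm_compute. Qed.
Lemma C2 : all (fun k => all (fun p => all (fun bb => all (fun i =>
   bitn i (gI p bb k) == bb (+) bitn ((i + p) %% 4) k) (iota 0 4)) [:: false; true]) (iota 0 4)) (iota 1 16).
Proof. by vm_compute. Qed.
Lemma C3 : all (good G_tau rows_tau orbi) (iota 1 16). Proof. by vm_compute. Qed.
Lemma C3' : all (good G_tau' rows_tau' orbi') (seq.filter okn (iota 1 16)). Proof. by vm_compute. Qed.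
Lemma C4 : perm_eq (iota 1 16) (flatten G_tau). Proof. by vm_compute. Qed.
Lemma C4' : perm_eq (seq.filter okn (iota 1 16)) (flatten G_tau'). Proof. by vm_compute. Qed.
Lemma C5 : all (fun j => all (fun l => orbi l == j) (nth [::] G_tau j)) (iota 0 4). Proof. by vm_compute. Qed.
Lemma C5' : all (fun j => all (fun l => orbi' l == j) (nth [::] G_tau' j)) (iota 0 3). Proof. by vm_compute. Qed.
Lemma C6 : all (fun l => l \in iota 1 16) (flatten G_tau ++ flatten G_tau'). Proof. by vm_compute. Qed.
Lemma C7 : all (fun k => (orbi k < 4) && (orbi' k < 3)) (iota 1 16). Proof. by vm_compute. Qed.


Local Open Scope classical_set_scope.
Local Open Scope ring_scope.

Section Perron.
Variable R : realType.
Variable n : nat.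
Variable A : 'M[R]_n.+1.
Hypothesis Apos : forall i j, 0 < A i j.

Definition PA := char_poly A.
Definition QA := \adj (char_poly_mx A).

Lemma ev_cpmx t : map_mx (horner_eval t) (char_poly_mx A) = t%:M - A.
Proof.
apply/matrixP => i j; rewrite !mxE /horner_eval.
by rewrite hornerD hornerN hornerMn hornerX hornerC.
Qed.

Lemma PA_eval t : PA.[t] = \det (t%:M - A).
Proof.
by rewrite -ev_cpmx det_map_mx /PA /char_poly /horner_eval.
Qed.

Lemma key_id t : (t%:M - A) *m map_mx (horner_eval t) QA = (PA.[t])%:M.
Proof.
by rewrite -ev_cpmx -map_mxM /QA mul_mx_adj map_scalar_mx.
Qed.

Lemma sum_shift t (x : 'I_n.+1 -> R) i :
  \sum_k (t%:M - A) i k * x k = t * x i - \sum_k A i k * x k.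
Proof.
under eq_bigr do rewrite !mxE mulrBl.
rewrite sumrB; congr (_ - _).
rewrite (bigD1 i) //= eqxx mulr1n big1 ?addr0 // => k /negbTE.
by rewrite eq_sym => ->; rewrite mulr0n mul0r.
Qed.

Definition Bt t i j := (QA i j).[t] / PA.[t].

Lemma Beq t : PA.[t] != 0 -> forall i j,
  t * Bt t i j - \sum_k A i k * Bt t k j = (i == j)%:R.
Proof.
move=> hP i j; rewrite -(sum_shift t (fun k => Bt t k j)).
move/matrixP: (key_id t) => /(_ i j); rewrite !mxE => h.
rewrite /Bt; transitivity ((\sum_k (t%:M - A) i k * map_mx (horner_eval t) QA k j) / PA.[t]).
  by rewrite mulr_suml; apply: eq_bigr => k _; rewrite !mxE mulrA.
by rewrite h mulrnAl mulfV.
Qed.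

Lemma dd t (x : 'I_n.+1 -> R) : (forall i, \sum_j A i j < t) ->
  (forall i, 0 <= t * x i - \sum_k A i k * x k) -> forall i, 0 <= x i.
Proof.
move=> hrow hx.
case: (@arg_minP _ _ _ ord0 predT x isT) => i0 _ hmin.
suff h0 : 0 <= x i0 by move=> i; apply: (le_trans h0); apply: hmin.
rewrite leNgt; apply/negP => xneg.
have h1 : \sum_k A i0 k * x i0 <= \sum_k A i0 k * x k.
  by apply: ler_sum => k _; rewrite ler_wpM2l ?hmin // ltW.
rewrite -mulr_suml in h1.
have := hx i0; have := hrow i0.
set s := \sum_j A i0 j; set s2 := \sum_k A i0 k * x k.
move: h1; rewrite -/s -/s2 => h1 h2 h3.
nra.
Qed.

Lemma posB t : 0 < t -> PA.[t] != 0 -> (forall i j, 0 <= Bt t i j) ->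
  forall i j, 0 < Bt t i j.
Proof.
move=> t0 hP hB i j.
have e := Beq t hP i j.
have [hs|hs] := ltP 0 (\sum_k A i k * Bt t k j).
  have : 0 < t * Bt t i j.
    have : (0 : R) <= (i == j)%:R by rewrite ler0n.
    lra.
  by rewrite pmulr_rgt0.
have hsum : \sum_k A i k * Bt t k j = 0.
  by apply/eqP; rewrite eq_le hs /=; apply: sumr_ge0 => k _; rewrite mulr_ge0 // ltW.
have hz : forall k, Bt t k j = 0.
  move=> k.
  have hF : forall k, predT k -> 0 <= A i k * Bt t k j.
    by move=> k' _; rewrite mulr_ge0 // ltW.
  have := @psumr_eq0P _ _ _ _ hF hsum k isT.
  move=> /eqP; rewrite mulf_eq0 (gt_eqF (Apos i k)) /=.
  by move=> /eqP.
have := Beq t hP j j; rewrite eqxx hz mulr0 big1 ?subr0.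
  by move/eqP; rewrite eq_sym oner_eq0.
by move=> k _; rewrite hz mulr0.
Qed.

Definition phi t := \big[Num.min/Bt t ord0 ord0]_(p : 'I_n.+1 * 'I_n.+1) Bt t p.1 p.2.

Lemma phi_le t i j : phi t <= Bt t i j.
Proof. exact: (bigmin_le _ (i, j) (fun p : 'I_n.+1 * 'I_n.+1 => Bt t p.1 p.2)). Qed.

Lemma phi_eq t : exists p : 'I_n.+1 * 'I_n.+1, phi t = Bt t p.1 p.2.
Proof.
rewrite /phi; elim/big_ind: _ => [|x y [p ->] [q ->]|p _]; last by exists p.
- by exists (ord0, ord0).
- by rewrite /Num.min; case: ifP => _; [exists p | exists q].
Qed.

Lemma cont_bigmin (I : Type) (s : seq I) (F : I -> R -> R) (f0 : R -> R) x :
  {for x, continuous f0} -> (forall i, {for x, continuous (F i)}) ->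
  {for x, continuous (fun t => \big[Num.min/f0 t]_(i <- s) F i t)}.
Proof.
move=> h0 hF; elim: s => [|i s IH].
  have -> : (fun t => \big[Num.min/f0 t]_(i <- [::]) F i t) = f0.
    by apply: funext => t; rewrite big_nil.
  exact: h0.
have -> : (fun t => \big[Num.min/f0 t]_(j <- i :: s) F j t) =
   (F i) \min (fun t => \big[Num.min/f0 t]_(j <- s) F j t).
  by apply: funext => t; rewrite big_cons.
exact: continuous_min.
Qed.

Lemma cont_Bt x i j : PA.[x] != 0 -> {for x, continuous (fun t => Bt t i j)}.
Proof.
move=> hx; rewrite /Bt.
apply: (@continuousM _ _ (horner (QA i j)) (fun t => (horner PA t)^-1)).
  exact: continuous_horner.
apply: continuousV => //; exact: continuous_horner.
Qed.

Lemma cont_phi x : PA.[x] != 0 -> {for x, continuous phi}.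
Proof.
move=> hx; rewrite /phi; apply: cont_bigmin; first exact: cont_Bt.
by move=> p; exact: cont_Bt.
Qed.

Variable lam : R.
Hypothesis hroot : root PA lam.
Hypothesis hmax : forall x, root PA x -> x <= lam.

Lemma Pnz s : lam < s -> PA.[s] != 0.
Proof.
move=> ls; apply/negP => h.
have := hmax s; rewrite rootE h => /(_ isT); rewrite leNgt ls.
by [].
Qed.

Lemma rowsum_lt t i : 0 < t -> \sum_j A i j < t + \sum_i' \sum_j A i' j + 1.
Proof.
move=> t0.
have : \sum_j A i j <= \sum_i' \sum_j A i' j.
  rewrite [X in _ <= X](bigD1 i) //= lerDl; apply: sumr_ge0 => k _; apply: sumr_ge0 => l _.
  exact: ltW.
lra.
Qed.

Lemma Bpos t : 0 < t -> lam < t -> forall i j, 0 < Bt t i j.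
Proof.
move=> t0 lt i j; rewrite ltNge; apply/negP => hle.
set t2 := t + \sum_i' \sum_j A i' j + 1.
have hsumA : 0 <= \sum_i' \sum_j A i' j.
  by apply: sumr_ge0 => k _; apply: sumr_ge0 => l _; exact: ltW.
have lt2 : t < t2 by rewrite /t2; lra.
have hP2 : PA.[t2] != 0 by apply: Pnz; lra.
have hB2 : forall i j, 0 <= Bt t2 i j.
  move=> i' j'; apply: (dd t2 (fun k => Bt t2 k j')) => [k|k].
    exact: rowsum_lt.
  by rewrite Beq // ler0n.
have phi2 : 0 < phi t2.
  by case: (phi_eq t2) => p ->; apply: posB => //; lra.
have phi1 : phi t <= 0 := le_trans (phi_le t i j) hle.
have cont : {within `[t, t2], continuous phi}.
  apply: continuous_in_subspaceT => u; rewrite inE /= in_itv /= => /andP [hu _].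
  by apply: cont_phi; apply: Pnz; lra.
have hv : Num.min (phi t) (phi t2) <= 0 <= Num.max (phi t) (phi t2).
  by apply/andP; split; [rewrite ge_min phi1 | rewrite le_max (ltW phi2) orbT].
have [c hc phic] := IVT (ltW lt2) cont hv.
move: hc; rewrite in_itv /= => /andP [hc _].
have hBc : forall i j, 0 <= Bt c i j by move=> i' j'; rewrite -phic phi_le.
have hPc : PA.[c] != 0 by apply: Pnz; lra.
have := posB c ltac:(lra) hPc hBc.
case: (phi_eq c) => p hp hpos.
by move: (hpos p.1 p.2); rewrite -hp phic ltxx.
Qed.

Lemma lam_pos : 0 < lam.
Proof.
rewrite ltNge; apply/negP => hl.
set t := A ord0 ord0 / 2.
have hA := Apos ord0 ord0.
have t0 : 0 < t by rewrite /t; lra.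
have hB := Bpos t t0 ltac:(lra).
have hP : PA.[t] != 0 by apply: Pnz; lra.
have e := Beq t hP ord0 ord0; rewrite eqxx in e.
have hge : A ord0 ord0 * Bt t ord0 ord0 <= \sum_k A ord0 k * Bt t k ord0.
  rewrite (bigD1 ord0) //= lerDl; apply: sumr_ge0 => k _.
  by rewrite mulr_ge0 // ltW.
have hb := hB ord0 ord0.
move: e hge hb; rewrite /t.
set s := \sum_k _; set b := Bt _ _ _ => e hge hb.
have hAb : 0 < A ord0 ord0 * b by apply: mulr_gt0.
have e' : A ord0 ord0 / 2 * b - s = 1 by rewrite e.
nra.
Qed.

Lemma super t : lam < t -> exists y : 'I_n.+1 -> R,
  (forall i, 0 < y i) /\ (forall i, \sum_k A i k * y k <= t * y i).
Proof.
move=> lt.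
have t0 : 0 < t by have := lam_pos; lra.
have hP : PA.[t] != 0 by apply: Pnz.
exists (fun i => \sum_j Bt t i j); split.
  move=> i; rewrite (bigD1 ord0) //=; apply: ltr_pwDl; first exact: Bpos.
  by apply: sumr_ge0 => j _; apply: ltW; apply: Bpos.
move=> i.
under eq_bigr do rewrite mulr_sumr.
rewrite exchange_big /= mulr_sumr; apply: ler_sum => j _.
have := Beq t hP i j.
have : (0 : R) <= (i == j)%:R by rewrite ler0n.
set s := \sum_k _; lra.
Qed.

Lemma sub : exists z : 'I_n.+1 -> R,
  [/\ (forall i, 0 <= z i), (exists i, 0 < z i) &
      (forall i, lam * z i <= \sum_k A i k * z k)].
Proof.
have hdet : \det ((lam%:M - A)^T) == 0.
  by rewrite det_tr -PA_eval -rootE.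
case/det0P: hdet => v vnz hv.
have hv' : (lam%:M - A) *m v^T = 0.
  by rewrite -(trmxK (lam%:M - A)) -trmx_mul hv trmx0.
have heig : forall i, lam * v 0 i = \sum_k A i k * v 0 k.
  move=> i; move/matrixP: hv' => /(_ i ord0); rewrite mxE [RHS]mxE.
  under eq_bigr do rewrite [v^T _ _]mxE.
  rewrite (sum_shift lam (fun k => v 0 k)) => /eqP; rewrite subr_eq0 => /eqP.
  by [].
exists (fun i => `|v 0 i|); split.
- by move=> i; exact: normr_ge0.
- case/boolP: [exists i, v 0 i != 0] => [/existsP [i hi]| /existsP hn].
    by exists i; rewrite normr_gt0.
  move/negP: vnz; case; apply/eqP/rowP => i; rewrite mxE.
  by apply/eqP/negPn/negP => h; apply: hn; exists i.
- move=> i.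
  apply: (le_trans (y := `|lam * v 0 i|)).
    by rewrite normrM ler_wpM2r // ler_norm.
  rewrite heig; apply: (le_trans (ler_norm_sum _ _ _)).
  apply: ler_sum => k _; rewrite normrM ger0_norm //; exact: ltW.
Qed.

End Perron.

Section Lim.
Variable R : realType.

Lemma ln_bounds (u : nat -> R) (lam c K : R) :
  0 < lam -> 0 < c -> 0 < K ->
  (forall M, c * lam ^+ M <= u M.+1) ->
  (forall t, lam < t -> forall M, u M.+1 <= K * t ^+ M.+1) ->
  forall d, 0 < d -> forall N,
  [/\ 0 < u N.+1, ln c + ln lam * N%:R <= ln (u N.+1) &
      ln (u N.+1) <= ln K + (ln lam + d) * N.+1%:R].
Proof.
move=> l0 c0 K0 hlo hup d d0 N.
have hcl : 0 < c * lam ^+ N by rewrite mulr_gt0 // exprn_gt0.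
have u0 : 0 < u N.+1 := lt_le_trans hcl (hlo N).
split => //.
  rewrite mulr_natr -lnXn //.
  have -> : ln c + ln (lam ^+ N) = ln (c * lam ^+ N).
    by rewrite lnM // posrE exprn_gt0.
  by rewrite ler_ln ?posrE.
set t1 := lam * expR d.
have t10 : 0 < t1 by rewrite mulr_gt0 // expR_gt0.
have lt1 : lam < t1.
  by rewrite /t1 -{1}(mulr1 lam) ltr_pM2l // expR_gt1.
have hK : 0 < K * t1 ^+ N.+1 by rewrite mulr_gt0 // exprn_gt0.
have -> : ln K + (ln lam + d) * N.+1%:R = ln (K * t1 ^+ N.+1).
  rewrite lnM ?posrE ?exprn_gt0 // lnXn // /t1 lnM ?posrE ?expR_gt0 //.
  by rewrite expRK mulr_natr.
by rewrite ler_ln ?posrE // hup.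
Qed.
Lemma lim_ratio (u v : nat -> R) (lam mu c K : R) :
  0 < lam -> 0 < mu -> 0 < c -> 0 < K ->
  (forall M, c * lam ^+ M <= u M.+1) ->
  (forall t, lam < t -> forall M, u M.+1 <= K * t ^+ M.+1) ->
  (forall M, c * mu ^+ M <= v M.+1) ->
  (forall t, mu < t -> forall M, v M.+1 <= K * t ^+ M.+1) ->
  (fun M : nat => ln (v M / u M) / M%:R) @ \oo --> ln (mu / lam).
Proof.
move=> l0 m0 c0 K0 hlu huu hlv huv.
apply/cvgrPdist_lt => e e0.
set d := e / 4.
have d0 : 0 < d by rewrite /d; lra.
set C := `|ln K - ln c + ln lam| + `|ln c - ln mu - ln K|.
near=> M.
have hM1 : (1 <= M)%N by near: M; exact: nbhs_infty_ge.
have hM2 : C / d + 1 <= M%:R by near: M; exact: nbhs_infty_ger.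
have [N eN] : exists N, M = N.+1 by exists M.-1; rewrite prednK.
move: hM2; rewrite eN => hN /=.
case: (@ln_bounds u lam c K l0 c0 K0 hlu huu d d0 N) => u0 lu1 lu2.
case: (@ln_bounds v mu c K m0 c0 K0 hlv huv d d0 N) => v0 lv1 lv2.
rewrite lnM ?posrE ?invr_gt0 // lnV ?posrE //.
rewrite lnM ?posrE ?invr_gt0 // lnV ?posrE //.
move: lu1 lu2 lv1 lv2.
set a := ln (u N.+1); set b := ln (v N.+1) => lu1 lu2 lv1 lv2.
have hm : N.+1%:R = N%:R + 1 :> R by rewrite -natr1.
move: hN lu1 lu2 lv1 lv2; rewrite hm.
set n := N%:R => hN lu1 lu2 lv1 lv2.
have n0 : 0 <= n by rewrite /n ler0n.
have m0' : 0 < n + 1 by lra.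
have hC : C < d * (n + 1).
  have : C / d < n + 1 by lra.
  by rewrite ltr_pdivrMr // mulrC.
have C1 : ln K - ln c + ln lam <= C.
  by rewrite /C; have := ler_norm (ln K - ln c + ln lam); have := normr_ge0 (ln c - ln mu - ln K); lra.
have C2 : - (ln c - ln mu - ln K) <= C.
  rewrite /C; have := ler_norm (- (ln c - ln mu - ln K)); rewrite normrN.
  by have := normr_ge0 (ln K - ln c + ln lam); lra.
set q := (b + - a) / (n + 1).
have hq : b + - a = q * (n + 1) by rewrite /q mulfVK // gt_eqF.
set L := ln mu + - ln lam.
have h1 : (q - L) * (n + 1) < (2 * d) * (n + 1).
  have : q * (n + 1) <= ln K - ln c + ln lam + L * (n + 1) + d * (n + 1).
    rewrite -hq /L; lra.
  lra.
have h2 : (- (2 * d)) * (n + 1) < (q - L) * (n + 1).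
  have : ln c - ln mu - ln K + L * (n + 1) - d * (n + 1) <= q * (n + 1).
    rewrite -hq /L; lra.
  lra.
rewrite ltr_pM2r // in h1; rewrite ltr_pM2r // in h2.
rewrite ltr_norml; apply/andP; split; rewrite /d in h1 h2; lra.
Unshelve. all: by end_near.
Qed.

End Lim.

Local Close Scope classical_set_scope.
Set Implicit Arguments. Unset Strict Implicit.

Section Cycle.
Variable R : realType.
Variable L : finType.
Variable V : L -> L -> R.

Fixpoint Vpow (k : nat) : L -> L -> R :=
  match k with
  | 0 => fun x y => (x == y)%:R
  | k'.+1 => fun x y => \sum_z V x z * Vpow k' z y
  end.

Definition fcons n (x : L) (g : {ffun 'I_n -> L}) : {ffun 'I_n.+1 -> L} :=
  [ffun i => if unlift ord0 i is Some j then g j else x].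
Definition ftail n (f : {ffun 'I_n.+1 -> L}) : {ffun 'I_n -> L} :=
  [ffun j => f (lift ord0 j)].

Lemma fcons0 n x (g : {ffun 'I_n -> L}) : fcons x g ord0 = x.
Proof. by rewrite ffunE unlift_none. Qed.
Lemma fconsS n x (g : {ffun 'I_n -> L}) j : fcons x g (lift ord0 j) = g j.
Proof. by rewrite ffunE liftK. Qed.
Lemma ftail_fcons n x (g : {ffun 'I_n -> L}) : ftail (fcons x g) = g.
Proof. by apply/ffunP => j; rewrite ffunE fconsS. Qed.
Lemma fcons_tail n (f : {ffun 'I_n.+1 -> L}) : fcons (f ord0) (ftail f) = f.
Proof.
apply/ffunP => i; rewrite ffunE; case: unliftP => [j ->|->] //.
by rewrite ffunE.
Qed.

Lemma sum_split n (F : {ffun 'I_n.+1 -> L} -> R) :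
  \sum_f F f = \sum_x \sum_(g : {ffun 'I_n -> L}) F (fcons x g).
Proof.
rewrite pair_big /=.
rewrite (reindex (fun p : L * {ffun 'I_n -> L} => fcons p.1 p.2)) //=.
exists (fun f : {ffun 'I_n.+1 -> L} => (f ord0, ftail f)) => [[x g] _|f _] /=.
  by rewrite fcons0 ftail_fcons.
exact: fcons_tail.
Qed.

Fixpoint chain (k : nat) : L -> {ffun 'I_k -> L} -> L -> R :=
  match k return L -> {ffun 'I_k -> L} -> L -> R with
  | 0 => fun x _ y => V x y
  | k'.+1 => fun x s y => V x (s ord0) * chain (s ord0) (ftail s) y
  end.

Lemma Vpow1 x y : Vpow 1 x y = V x y.
Proof.
rewrite /= (bigD1 y) //= eqxx mulr1 big1 ?addr0 // => z /negbTE ->.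
by rewrite mulr0.
Qed.

Lemma chain_sum k x y :
  \sum_(s : {ffun 'I_k -> L}) chain x s y = Vpow k.+1 x y.
Proof.
elim: k x => [|k IH] x.
  by rewrite Vpow1 /= sumr_const card_ffun card_ord expn0.
rewrite sum_split /=.
under eq_bigr do under eq_bigr do rewrite fcons0 ftail_fcons.
by apply: eq_bigr => z _; rewrite -mulr_sumr IH.
Qed.

Definition openprod k (s : {ffun 'I_k.+1 -> L}) y :=
  (\prod_(i < k) V (s (widen_ord (leqnSn k) i)) (s (lift ord0 i))) * V (s ord_max) y.

Lemma chain_open k x (g : {ffun 'I_k -> L}) y : chain x g y = openprod (fcons x g) y.
Proof.
elim: k x g => [|k IH] x g.
  rewrite /openprod big_ord0 mul1r /=.
  have -> : (ord_max : 'I_1) = ord0 by apply: val_inj.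
  by rewrite fcons0.
rewrite /= IH fcons_tail /openprod big_ord_recl mulrA -!mulrA; congr (_ * _).
  have -> : widen_ord (leqnSn k.+1) ord0 = ord0 by apply: val_inj.
  by rewrite fcons0 fconsS.
congr (_ * _); last first.
  have -> : (ord_max : 'I_k.+2) = lift ord0 ord_max by apply: val_inj.
  by rewrite fconsS.
apply: eq_bigr => i _.
have -> : widen_ord (leqnSn k.+1) (lift ord0 i) = lift ord0 (widen_ord (leqnSn k) i).
  by apply: val_inj.
by rewrite !fconsS.
Qed.

Lemma cyc_open k (s : {ffun 'I_k.+1 -> L}) :
  \prod_(m < k.+1) V (s m) (s (ordS m)) = openprod s (s ord0).
Proof.
rewrite big_ord_recr /openprod; congr (_ * _).
  apply: eq_bigr => i _; congr (V _ (s _)); apply: val_inj => /=.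
  by rewrite modn_small // ltnS.
by congr (V _ (s _)); apply: val_inj => /=; rewrite modnn.
Qed.

Lemma cyc_sum k :
  \sum_(s : {ffun 'I_k.+1 -> L}) \prod_(m < k.+1) V (s m) (s (ordS m)) =
  \sum_x Vpow k.+1 x x.
Proof.
under eq_bigr do rewrite cyc_open.
rewrite sum_split; apply: eq_bigr => x _.
rewrite -chain_sum; apply: eq_bigr => g _.
by rewrite chain_open fcons0.
Qed.

Hypothesis V0 : forall x y, 0 <= V x y.

Lemma Vpow_ge0 k x y : 0 <= Vpow k x y.
Proof.
elim: k x y => [|k IH] x y /=; first by rewrite ler0n.
by apply: sumr_ge0 => z _; rewrite mulr_ge0.
Qed.

Lemma Vpow_S_sum k x (Y : L -> R) :
  \sum_y Vpow k.+1 x y * Y y = \sum_z V x z * \sum_y Vpow k z y * Y y.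
Proof.
rewrite /=; under eq_bigr do rewrite mulr_suml.
rewrite exchange_big /=; apply: eq_bigr => z _.
by rewrite mulr_sumr; apply: eq_bigr => y _; rewrite mulrA.
Qed.

Lemma Vpow0_sum x (Y : L -> R) : \sum_y Vpow 0 x y * Y y = Y x.
Proof.
rewrite /= (bigD1 x) //= eqxx mul1r big1 ?addr0 // => y /negbTE.
by rewrite eq_sym => ->; rewrite mul0r.
Qed.

Lemma up_bound (Y : L -> R) t : 0 <= t ->
  (forall x, \sum_y V x y * Y y <= t * Y x) ->
  forall k x, \sum_y Vpow k x y * Y y <= t ^+ k * Y x.
Proof.
move=> t0 hY; elim=> [|k IH] x; first by rewrite Vpow0_sum expr0 mul1r.
rewrite Vpow_S_sum.
apply: (le_trans (y := \sum_z V x z * (t ^+ k * Y z))).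
  by apply: ler_sum => z _; rewrite ler_wpM2l.
under eq_bigr do rewrite mulrCA.
rewrite -mulr_sumr exprSr -mulrA ler_wpM2l ?exprn_ge0 //.
Qed.

Lemma lo_bound (Z : L -> R) lam : 0 <= lam ->
  (forall x, lam * Z x <= \sum_y V x y * Z y) ->
  forall k x, lam ^+ k * Z x <= \sum_y Vpow k x y * Z y.
Proof.
move=> l0 hZ; elim=> [|k IH] x; first by rewrite Vpow0_sum expr0 mul1r.
rewrite Vpow_S_sum.
apply: (le_trans (y := \sum_z V x z * (lam ^+ k * Z z))); last first.
  by apply: ler_sum => z _; rewrite ler_wpM2l.
under eq_bigr do rewrite mulrCA.
rewrite -mulr_sumr exprSr -mulrA ler_wpM2l ?exprn_ge0 //.
Qed.

Lemma trace_up (Y : L -> R) t : 0 <= t -> (forall x, 0 < Y x) ->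
  (forall x, \sum_y V x y * Y y <= t * Y x) ->
  forall k, \sum_x Vpow k x x <= #|L|%:R * t ^+ k.
Proof.
move=> t0 Ypos hY k.
apply: (le_trans (y := \sum_(x : L) t ^+ k)); last by rewrite sumr_const mulr_natl.
apply: ler_sum => x _.
have h := up_bound t0 hY k x.
have : Vpow k x x * Y x <= \sum_y Vpow k x y * Y y.
  rewrite (bigD1 x) //= lerDl; apply: sumr_ge0 => y _.
  by rewrite mulr_ge0 ?Vpow_ge0 // ltW.
move=> h2; have h3 := le_trans h2 h.
by rewrite -(ler_pM2r (Ypos x)).
Qed.

Lemma trace_lo (Z : L -> R) lam c : 0 <= lam -> 0 < c ->
  (forall x, 0 <= Z x) -> 0 < \sum_x Z x ->
  (forall x y, 0 < Z x -> 0 < Z y -> c <= V x y) ->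
  (forall x, lam * Z x <= \sum_y V x y * Z y) ->
  forall k, c * lam ^+ k <= \sum_x Vpow k.+1 x x.
Proof.
move=> l0 c0 Z0 S0 hc hZ k.
set S := \sum_x Z x.
set ind := fun x : L => if 0 < Z x then (1 : R) else 0.
have indZ : forall x, Z x <= S * ind x.
  move=> x; rewrite /ind; case: ifP => h.
    by rewrite mulr1 /S (bigD1 x) //= lerDl sumr_ge0.
  by rewrite mulr0; move/negbT: h; rewrite -leNgt.
have indZ2 : forall x, ind x * Z x = Z x.
  move=> x; rewrite /ind; case: ifP => h; first by rewrite mul1r.
  by rewrite mul0r; apply/eqP; rewrite eq_le Z0 /=; move/negbT: h; rewrite -leNgt.
have ind0 : forall x, 0 <= ind x by move=> x; rewrite /ind; case: ifP.
have step1 : \sum_x \sum_z (c * (ind x * ind z)) * Vpow k z x <= \sum_x Vpow k.+1 x x.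
  apply: ler_sum => x _; rewrite /=; apply: ler_sum => z _.
  apply: ler_wpM2r; first exact: Vpow_ge0.
  rewrite /ind; case: ifP => hx; case: ifP => hz; rewrite ?(mulr0, mul0r); try exact: V0.
  by rewrite !mulr1; apply: hc.
have step2 : c * (lam ^+ k * S) <= S * \sum_x \sum_z (c * (ind x * ind z)) * Vpow k z x.
  have -> : S * \sum_x \sum_z (c * (ind x * ind z)) * Vpow k z x =
      c * \sum_z ind z * \sum_x Vpow k z x * (S * ind x).
    rewrite mulr_sumr; under eq_bigr do rewrite mulr_sumr.
    rewrite exchange_big /= mulr_sumr; apply: eq_bigr => z0 _.
    rewrite mulr_sumr mulr_sumr; apply: eq_bigr => x0 _.
    by ring.
  apply: ler_wpM2l; first exact: ltW.
  apply: (le_trans (y := \sum_w ind w * \sum_v Vpow k w v * Z v)).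
    rewrite /S mulr_sumr; apply: ler_sum => w _.
    rewrite [X in X <= _](_ : _ = ind w * (lam ^+ k * Z w)); last by rewrite mulrCA indZ2.
    by rewrite ler_wpM2l // lo_bound.
  apply: ler_sum => w _; rewrite ler_wpM2l //; apply: ler_sum => v _.
  by rewrite ler_wpM2l ?Vpow_ge0.
have : c * (lam ^+ k * S) <= S * \sum_x Vpow k.+1 x x.
  by apply: (le_trans step2); apply: ler_wpM2l; [exact: ltW | exact: step1].
have e : c * (lam ^+ k * S) = S * (c * lam ^+ k) by ring.
by rewrite e ler_pM2l.
Qed.

End Cycle.


Lemma cardSite : #|{: Site}| = 8%N.
Proof. by rewrite card_prod !card_ord. Qed.
Lemma evenC (S : {set Site}) : ~~ odd #|S| -> ~~ odd #|~: S|.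
Proof.
have := cardsC S; rewrite cardSite => /(congr1 odd); rewrite oddD /=.
by case: (odd #|S|); case: (odd #|~: S|).
Qed.
Lemma aE {i} (h : (i < 4)%N) : a i = (ord0, Ordinal h).
Proof. by rewrite /a; congr pair; apply/val_inj; rewrite /= inordK. Qed.
Lemma bE {i} (h : (i < 4)%N) : b i = (ord_max, Ordinal h).
Proof. by rewrite /b; congr pair; apply/val_inj; rewrite /= inordK. Qed.
Ltac siteE := rewrite ?(aE (isT : (0 < 4)%N)) ?(aE (isT : (1 < 4)%N)) ?(aE (isT : (2 < 4)%N)) ?(aE (isT : (3 < 4)%N))
  ?(bE (isT : (0 < 4)%N)) ?(bE (isT : (1 < 4)%N)) ?(bE (isT : (2 < 4)%N)) ?(bE (isT : (3 < 4)%N)).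
Lemma even2 : all (fun S : {set Site} => ~~ odd #|S|) Phi2.
Proof. rewrite /Phi2 /= !cardsU1 !cards1 !inE; siteE. vm_compute. reflexivity. Qed.
Lemma even4 : all (fun S : {set Site} => ~~ odd #|S|) Phi4.
Proof. rewrite /Phi4 /= -!finset.setUA !cardsU1 !cards1 !inE; siteE. vm_compute. reflexivity. Qed.

Lemma evenPhi S : S \in Phi -> ~~ odd #|S|.
Proof.
rewrite /Phi inE !mem_cat => /or4P [h|h|h|h].
- exact: (allP even2).
- exact: (allP even4).
- by move: h => /mapP [beta hb ->]; apply: evenC; exact: (allP even2).
- by move: h; rewrite inE => /eqP ->; rewrite cardsT cardSite.
Qed.

Definition shp (p : nat) (t : Site) : Site := (t.1, @inord 3 ((nat_of_ord t.2 + p) %% 4)).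

Lemma shp_inj p : injective (shp p).
Proof.
move=> [x1 x2] [y1 y2] /= [e1 e2]; rewrite e1; congr pair.
have := congr1 val e2; rewrite /= !inordK ?ltn_pmod // => /eqP.
by rewrite eqn_modDr !modn_small // => /eqP h; apply: val_inj.
Qed.

Lemma rotE r al : Defs.rot r al = shp r @: al.
Proof. by []. Qed.

Lemma shp_rot p r al : shp p @: Defs.rot r al = Defs.rot (r + p) al.
Proof.
rewrite rotE -imset_comp; apply: eq_imset => t /=.
rewrite /shp /=; congr pair; apply: val_inj => /=.
by rewrite !inordK ?ltn_pmod // modnDml addnA.
Qed.

Lemma rot_mod r al : Defs.rot (r + 4) al = Defs.rot r al.
Proof.
rewrite !rotE; apply: eq_imset => t; rewrite /shp; congr pair; apply: val_inj => /=.
by rewrite addnA modnDr.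
Qed.

Lemma card_rot r al : #|Defs.rot r al| = #|al|.
Proof. by rewrite rotE card_imset //; exact: shp_inj. Qed.

Definition gL (p : nat) (b : bool) (x : layer) : layer :=
  [ffun i : 'I_4 => b (+) x (@inord 3 ((nat_of_ord i + p) %% 4))].

Section Sym.
Variable R : realType.

Lemma spinX (bb c : bool) : spin (bb (+) c) = (if bb then -1 else 1) * (spin c : R).
Proof. by case: bb; case: c; rewrite /spin /= ?mul1r ?mulN1r ?opprK. Qed.

Lemma sigmaO_g p bb sa sb O :
  sigmaO (gL p bb sa) (gL p bb sb) O =
  (if bb then -1 else 1) ^+ #|O| * (sigmaO sa sb (shp p @: O) : R).
Proof.
rewrite /sigmaO big_imset /=; last by move=> x y _ _; exact: shp_inj.
rewrite -prodr_const -big_split /=; apply: eq_bigr => t _.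
rewrite -spinX; congr spin; rewrite /shp /=.
by case: ifP => _; rewrite ffunE.
Qed.

Lemma sum4_shift (H : nat -> R) : (forall r, H (r + 4)%N = H r) ->
  forall p, \sum_(r < 4) H (r + p)%N = \sum_(r < 4) H r.
Proof.
move=> hH; elim=> [|p IH]; first by under eq_bigr do rewrite addn0.
rewrite -IH.
have e : forall F : nat -> R, \sum_(r < 4) F r = F 0%N + F 1%N + F 2%N + F 3%N.
  move=> F; rewrite -(big_mkord xpredT) /index_iota /= !big_cons big_nil.
  by rewrite addr0 !addrA.
rewrite (e (fun r => H (r + p.+1)%N)) (e (fun r => H (r + p)%N)) /= !addSn !add0n.
have -> : H (3 + p).+1 = H p by rewrite -addSn addnC hH.
lra.
Qed.

Lemma Hm_inv (J : {set Site} -> R) p bb sa sb :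
  Hm J (gL p bb sa) (gL p bb sb) = Hm J sa sb.
Proof.
rewrite /Hm; congr (- _); apply: eq_bigr => al hal; congr (_ * _).
under eq_bigr do rewrite sigmaO_g card_rot shp_rot.
have ev := evenPhi hal.
have -> : ((if bb then -1 else 1) ^+ #|al| : R) = 1.
  case: bb; last by rewrite expr1n.
  by rewrite -signr_odd (negbTE ev) expr0.
under eq_bigr do rewrite mul1r.
apply: (sum4_shift (H := fun r => sigmaO sa sb (Defs.rot r al))).
by move=> r; rewrite rot_mod.
Qed.

End Sym.

Lemma C8 : all (fun i => (orbi (nth 0%N rows_tau i) == i) && (nth 0%N rows_tau i \in iota 1 16)) (iota 0 4).
Proof. by vm_compute. Qed.
Lemma C8' : all (fun i => (orbi' (nth 0%N rows_tau' i) == i) && okn (nth 0%N rows_tau' i) && (nth 0%N rows_tau' i \in iota 1 16)) (iota 0 3).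
Proof. by vm_compute. Qed.

Definition idx (x : layer) : nat :=
  (1 + x (@inord 3 0) + 2 * x (@inord 3 1) + 4 * x (@inord 3 2) + 8 * x (@inord 3 3))%N.

Lemma stateE k i : state_of_index k i = bitn i k.
Proof. by rewrite ffunE. Qed.

Lemma idx_state k : k \in iota 1 16 -> idx (state_of_index k) = k.
Proof. by rewrite /idx !ffunE !inordK // => /(allP C1) /eqP. Qed.

Lemma state_idx x : state_of_index (idx x) = x.
Proof.
apply/ffunP => i; rewrite ffunE /idx.
have -> : x i = x (inord i) by rewrite inord_val.
case: i => [[|[|[|[|m]]]] hi] //=;
  by case: (x (inord 0)); case: (x (inord 1)); case: (x (inord 2)); case: (x (inord 3)).
Qed.

Lemma idx_range x : idx x \in iota 1 16.
Proof.
by rewrite /idx; case: (x (inord 0)); case: (x (inord 1)); case: (x (inord 2)); case: (x (inord 3)).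
Qed.

Lemma ex4 (P : pred 'I_4) : [exists i, P i] =
  [|| P (inord 0), P (inord 1), P (inord 2) | P (inord 3)].
Proof.
apply/existsP/idP => [[i hi]|].
  rewrite -(inord_val i) in hi; case: i hi => [[|[|[|[|m]]]] hm] //= hi;
  by rewrite hi ?orbT.
by case/or4P => h; eexists; exact: h.
Qed.

Definition okL (x : layer) : bool := ~~ [exists i : 'I_4, x i && x (ordS i)].

Lemma okL_state k : okL (state_of_index k) = okn k.
Proof.
rewrite /okL ex4 !ffunE /okn /=.
by rewrite !inordK // !orbA.
Qed.

Lemma nperc_all M (s : config M) : ~~ percolation s = [forall m, okL (s m)].
Proof. by rewrite /percolation negb_exists. Qed.

Lemma sum_flatten (R : realType) (G : seq (seq nat)) (F : nat -> R) :
  \sum_(k <- flatten G) F k = \sum_(j < size G) \sum_(l <- nth [::] G j) F l.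
Proof.
elim: G => [|g G IH]; first by rewrite big_nil big_ord0.
by rewrite /= big_cat IH big_ord_recl.
Qed.

Lemma gL_state p bb k : (p < 4)%N -> k \in iota 1 16 ->
  gL p bb (state_of_index k) = state_of_index (gI p bb k).
Proof.
move=> hp hk; apply/ffunP => i; rewrite !ffunE inordK ?ltn_pmod //.
have hp' : p \in iota 0 4 by rewrite mem_iota.
move: (allP (allP C2 k hk) p hp') => /allP hb.
have hbb : bb \in [:: false; true] by case: bb.
have hi : (nat_of_ord i) \in iota 0 4 by rewrite mem_iota ltn_ord.
move: (allP (hb bb hbb) i hi) => /eqP h.
exact: (esym h).
Qed.

Section Lump.
Variable R : realType.
Variable J : {set Site} -> R.
Variables kB T : R.

Definition W (x y : layer) : R := expR (- Hm J x y / (kB * T)).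
Definition W' (x y : layer) : R := if okL x && okL y then W x y else 0.

Lemma W_inv p bb x y : W (gL p bb x) (gL p bb y) = W x y.
Proof. by rewrite /W Hm_inv. Qed.

Lemma W_gt0 x y : 0 < W x y.
Proof. exact: expR_gt0. Qed.

Lemma W'_ge0 x y : 0 <= W' x y.
Proof. by rewrite /W'; case: ifP => _ //; exact: ltW (W_gt0 x y). Qed.

Lemma sum_layers (F : layer -> R) :
  \sum_x F x = \sum_(k <- iota 1 16) F (state_of_index k).
Proof.
rewrite (reindex (fun k : 'I_16 => state_of_index k.+1)); last first.
  exists (fun x => @inord 15 (idx x).-1).
    move=> k _; rewrite idx_state; first by rewrite /= inord_val.
    by rewrite mem_iota /= ltnS ltn_ord.
  move=> x _; have := idx_range x; rewrite mem_iota => /andP [h1 h2].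
  by rewrite inordK ?prednK ?state_idx // -ltnS prednK.
rewrite -(big_mkord xpredT (fun k => F (state_of_index k.+1))).
have -> : iota 1 16 = map S (iota 0 16) by [].
by rewrite big_map.
Qed.

Lemma Z_cyc M : Z J kB T M.+1 = \sum_x Vpow W M.+1 x x.
Proof.
rewrite /Z -cyc_sum; apply: eq_bigr => s _.
by rewrite /Ham -sumrN mulr_suml expR_sum.
Qed.

Lemma Z'_cyc M : Z' J kB T M.+1 = \sum_x Vpow W' M.+1 x x.
Proof.
rewrite /Z' -cyc_sum big_mkcond /=; apply: eq_bigr => s _.
rewrite nperc_all; case: (boolP [forall m, okL (s m)]) => [/forallP hall | /forallPn [m hm]].
  rewrite /Ham -sumrN mulr_suml expR_sum; apply: eq_bigr => m _.
  by rewrite /W' !hall.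
by rewrite (bigD1 m) //= /W' (negbTE hm) /= mul0r.
Qed.

Lemma sym_sum G rows (orbf : nat -> nat) k : k \in iota 1 16 -> good G rows orbf k ->
  all (fun Gj => all (fun l => l \in iota 1 16) Gj) G -> forall j,
  \sum_(l <- nth [::] G j) W (state_of_index k) (state_of_index l) =
  \sum_(l <- nth [::] G j) W (state_of_index (nth 0%N rows (orbf k))) (state_of_index l).
Proof.
move=> hk /hasP [[p bb] hpb /andP [/eqP hr hperm]] hsub j.
have hp : (p < 4)%N.
  move: hpb; rewrite /pbs => /allpairsP [[p' b'] [hp' _ e]].
  by case: e => -> _; move: hp'; rewrite mem_iota.
have [hj|hj] := ltnP j (size G); last by rewrite (nth_default _ hj) !big_nil.
have hGj : nth [::] G j \in G := mem_nth _ hj.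
rewrite -hr.
transitivity (\sum_(l <- nth [::] G j) W (gL p bb (state_of_index k)) (gL p bb (state_of_index l))).
  by apply: eq_bigr => l _; rewrite W_inv.
rewrite gL_state // big_seq.
transitivity (\sum_(l <- nth [::] G j) W (state_of_index (gI p bb k)) (state_of_index (gI p bb l))).
  rewrite [RHS]big_seq; apply: eq_bigr => l hl; rewrite gL_state //.
  exact: (allP (allP hsub _ hGj)).
rewrite -(big_map (gI p bb) xpredT (fun l => W (state_of_index (gI p bb k)) (state_of_index l))).
exact: perm_big (allP hperm _ hGj).
Qed.

Lemma lump_core G rows (orbf : nat -> nat) kx (v : nat -> R) :
  kx \in iota 1 16 -> good G rows orbf kx ->
  all (fun Gj => all (fun l => l \in iota 1 16) Gj) G ->
  (forall j, (j < size G)%N -> all (fun l => orbf l == j) (nth [::] G j)) ->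
  \sum_(k <- flatten G) W (state_of_index kx) (state_of_index k) * v (orbf k) =
  \sum_(j < size G) (\sum_(l <- nth [::] G j)
       W (state_of_index (nth 0%N rows (orbf kx))) (state_of_index l)) * v j.
Proof.
move=> hk hg hsub hlab; rewrite sum_flatten; apply: eq_bigr => j _.
rewrite -(sym_sum hk hg hsub) mulr_suml big_seq [RHS]big_seq.
apply: eq_bigr => l hl.
by rewrite (eqP (allP (hlab j (ltn_ord j)) l hl)).
Qed.

Lemma C6a : all (fun Gj => all (fun l => l \in iota 1 16) Gj) G_tau.
Proof. by vm_compute. Qed.
Lemma C6b : all (fun Gj => all (fun l => l \in iota 1 16) Gj) G_tau'.
Proof. by vm_compute. Qed.

Lemma orbi_lt k : k \in iota 1 16 -> (orbi k < 4)%N.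
Proof. by move=> /(allP C7) /andP []. Qed.
Lemma orbi'_lt k : k \in iota 1 16 -> (orbi' k < 3)%N.
Proof. by move=> /(allP C7) /andP []. Qed.

Lemma lump_full x (v : 'I_4 -> R) :
  \sum_y W x y * v (inord (orbi (idx y))) =
  \sum_(j < 4) tau J kB T (inord (orbi (idx x))) j * v j.
Proof.
rewrite sum_layers.
transitivity (\sum_(k <- iota 1 16) W x (state_of_index k) * (fun j => v (inord j)) (orbi k)).
  by rewrite big_seq [RHS]big_seq; apply: eq_bigr => k hk; rewrite idx_state.
rewrite (perm_big _ C4) -{1}(state_idx x).
have hk := idx_range x.
rewrite (@lump_core G_tau rows_tau orbi (idx x) (fun j => v (inord j)) hk).
- apply: eq_bigr => j _; rewrite mxE inordK ?orbi_lt // inord_val.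
  by [].
- exact: (allP C3 _ hk).
- exact: C6a.
- by move=> j hj; apply: (allP C5); rewrite mem_iota.
Qed.

Lemma lump_res x (v : 'I_3 -> R) (c : R) : okL x ->
  \sum_y W' x y * (if okL y then v (inord (orbi' (idx y))) else c) =
  \sum_(j < 3) tau' J kB T (inord (orbi' (idx x))) j * v j.
Proof.
move=> hx.
transitivity (\sum_y (if okL y then W x y * v (inord (orbi' (idx y))) else 0)).
  by apply: eq_bigr => y _; rewrite /W' hx /=; case: ifP => _ //; rewrite mul0r.
rewrite sum_layers.
transitivity (\sum_(k <- iota 1 16 | okn k) W x (state_of_index k) * (fun j => v (inord j)) (orbi' k)).
  rewrite [RHS]big_mkcond big_seq [RHS]big_seq; apply: eq_bigr => k hk.
  by rewrite okL_state idx_state.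
rewrite -big_filter (perm_big _ C4') -{1}(state_idx x).
have hk : idx x \in seq.filter okn (iota 1 16).
  by rewrite mem_filter -okL_state state_idx hx idx_range.
rewrite (@lump_core G_tau' rows_tau' orbi' (idx x) (fun j => v (inord j)) (idx_range x)).
- apply: eq_bigr => j _; rewrite mxE inordK ?orbi'_lt ?idx_range // inord_val.
  by [].
- exact: (allP C3' _ hk).
- exact: C6b.
- by move=> j hj; apply: (allP C5'); rewrite mem_iota.
Qed.

Lemma sum_pos (s : seq nat) (F : nat -> R) : s != [::] -> (forall l, 0 < F l) ->
  0 < \sum_(l <- s) F l.
Proof.
case: s => // l s _ hF; rewrite big_cons; apply: ltr_pwDl; first exact: hF.
by apply: sumr_ge0 => k _; apply: ltW.
Qed.

Lemma tau_pos i j : 0 < tau J kB T i j.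
Proof.
rewrite mxE; apply: sum_pos; last by move=> l; exact: expR_gt0.
by case: j => [[|[|[|[|m]]]] hm].
Qed.

Lemma tau'_pos i j : 0 < tau' J kB T i j.
Proof.
rewrite mxE; apply: sum_pos; last by move=> l; exact: expR_gt0.
by case: j => [[|[|[|m]]] hm].
Qed.

Lemma card_layer : #|{: layer}| = 16%N.
Proof. by rewrite card_ffun card_bool card_ord. Qed.

Definition cW := \big[Num.min/1]_(x : layer) \big[Num.min/1]_(y : layer) W x y.

Lemma cW_pos : 0 < cW.
Proof.
rewrite /cW; elim/big_ind: _ => //; first by move=> a0 b0 ha hb; rewrite lt_min ha hb.
move=> x _; elim/big_ind: _ => //; first by move=> a0 b0 ha hb; rewrite lt_min ha hb.
by move=> y _; exact: W_gt0.
Qed.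

Lemma cW_le x y : cW <= W x y.
Proof.
apply: (le_trans (bigmin_le _ x _)).
exact: (bigmin_le _ y (fun y => W x y)).
Qed.

Lemma W_ge0 x y : 0 <= W x y.
Proof. exact: ltW (W_gt0 x y). Qed.

Lemma Zbounds lam : (forall x, root (char_poly (tau J kB T)) x -> x <= lam) ->
  root (char_poly (tau J kB T)) lam ->
  [/\ 0 < lam, forall M, cW * lam ^+ M <= Z J kB T M.+1 &
      forall t, lam < t -> forall M, Z J kB T M.+1 <= 16 * t ^+ M.+1].
Proof.
move=> hmax hroot.
have lp := @lam_pos R 3 (tau J kB T) tau_pos lam hmax.
split => //.
- case: (@sub R 3 (tau J kB T) tau_pos lam hroot) => z [z0 [i0 zi0] hz] M.
  set Zf := fun y => z (inord (orbi (idx y))).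
  rewrite Z_cyc.
  apply: (trace_lo W_ge0 (Z := Zf) (ltW lp) cW_pos).
  + by move=> x; exact: z0.
  + set r := nth 0%N rows_tau i0.
    have hr : (orbi r == i0) && (r \in iota 1 16).
      by apply: (allP C8); rewrite mem_iota /=.
    case/andP: hr => /eqP ho hri.
    rewrite (bigD1 (state_of_index r)) //=; apply: ltr_pwDl.
      by rewrite /Zf idx_state // ho inord_val.
    by apply: sumr_ge0 => y _; exact: z0.
  + by move=> x y _ _; exact: cW_le.
  + move=> x; rewrite /Zf lump_full; exact: hz.
- move=> t lt M.
  case: (@super R 3 (tau J kB T) tau_pos lam hmax t lt) => y [y0 hy].
  rewrite Z_cyc -card_layer.
  apply: (trace_up W_ge0 (Y := fun x => y (inord (orbi (idx x))))).
  + by lra.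
  + by move=> x; exact: y0.
  + by move=> x; rewrite lump_full; exact: hy.
Qed.

Lemma W'_notok x y : ~~ okL x -> W' x y = 0.
Proof. by rewrite /W' => /negbTE ->. Qed.

Lemma Z'bounds mu : (forall x, root (char_poly (tau' J kB T)) x -> x <= mu) ->
  root (char_poly (tau' J kB T)) mu ->
  [/\ 0 < mu, forall M, cW * mu ^+ M <= Z' J kB T M.+1 &
      forall t, mu < t -> forall M, Z' J kB T M.+1 <= 16 * t ^+ M.+1].
Proof.
move=> hmax hroot.
have lp := @lam_pos R 2 (tau' J kB T) tau'_pos mu hmax.
split => //.
- case: (@sub R 2 (tau' J kB T) tau'_pos mu hroot) => z [z0 [i0 zi0] hz] M.
  set Zr := fun y => if okL y then z (inord (orbi' (idx y))) else 0.
  have Zr0 : forall y, 0 <= Zr y by move=> y; rewrite /Zr; case: ifP.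
  rewrite Z'_cyc.
  apply: (trace_lo W'_ge0 (Z := Zr) (ltW lp) cW_pos) => //.
  + set r := nth 0%N rows_tau' i0.
    have hr : [&& orbi' r == i0, okn r & r \in iota 1 16].
      by rewrite andbA; apply: (allP C8'); rewrite mem_iota /=.
    case/and3P: hr => /eqP ho hok hri.
    rewrite (bigD1 (state_of_index r)) //=; apply: ltr_pwDl.
      by rewrite /Zr okL_state hok idx_state // ho inord_val.
    by apply: sumr_ge0 => y _; exact: Zr0.
  + move=> x y; rewrite /Zr /W'.
    case: (okL x); last by rewrite ltxx.
    case: (okL y); last by rewrite ltxx.
    by move=> _ _; exact: cW_le.
  + move=> x; case hx : (okL x).
      by rewrite /Zr [in X in _ * X]hx lump_res //; exact: hz.
    rewrite /Zr [in X in _ * X]hx mulr0; apply: sumr_ge0 => y _.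
    by rewrite W'_notok ?hx // mul0r.
- move=> t lt M.
  case: (@super R 2 (tau' J kB T) tau'_pos mu hmax t lt) => y [y0 hy].
  rewrite Z'_cyc -card_layer.
  have t0 : 0 < t by lra.
  apply: (trace_up W'_ge0 (Y := fun x => if okL x then y (inord (orbi' (idx x))) else 1)).
  + by lra.
  + by move=> x; case: ifP.
  + move=> x; case hx : (okL x).
      by rewrite lump_res //; exact: hy.
    rewrite mulr1 big1 ?ltW // => x' _.
    by rewrite W'_notok ?hx // mul0r.
Qed.

End Lump.


Unset Implicit Arguments. Set Strict Implicit.
Local Open Scope classical_set_scope.
Local Open Scope ring_scope.

Theorem theorem2 (R : realType) (J : {set Site} -> R) (kB T lam mu : R) :
  0 < kB -> 0 < T ->
  root (char_poly (tau J kB T)) lam ->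
  (forall x : R, root (char_poly (tau J kB T)) x -> x <= lam) ->
  root (char_poly (tau' J kB T)) mu ->
  (forall x : R, root (char_poly (tau' J kB T)) x -> x <= mu) ->
  (fun M : nat => ln (PM J kB T M) / M%:R) @ \oo --> ln (mu / lam).
Proof.
move=> _ _ hroot hmax hroot' hmax'.
have [lp hlo hup] := @Zbounds R J kB T lam hmax hroot.
have [mp hlo' hup'] := @Z'bounds R J kB T mu hmax' hroot'.
have K0 : (0 : R) < 16 by lra.
have := @lim_ratio R (Z J kB T) (Z' J kB T) lam mu (cW J kB T) 16 lp mp
  (@cW_pos R J kB T) K0 hlo hup hlo' hup'.
by [].
Qed.
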